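(* Let $U$ be a discrete group with torsion and $e\in\mathbb{C}[U]$ a nontrivial projection. In $\mathbb{C}[U\wr\mathbb{Z}]$ put $e_i=t^{-i}et^i$, $f_i=1-e_i$ for $i\in\mathbb{Z}$, and for $n\ge 2$ put $q_n=f_1e_2e_3\cdots e_{n-1}f_n$ (so $q_2=f_1f_2$). If $1\le m<n$ and $1\le m'<n'$, then \[ q_{n'}t^{-m'}t^{m}q_n=\delta_{n,n'}\delta_{m,m'}\,q_n . \]
   Context: $U\wr\mathbb{Z}=(\bigoplus_{i\in\mathbb{Z}}U)\rtimes C_\infty$, where $C_\infty$ is infinite cyclic with generator $t$ acting by the shift $t^{-1}((g_n)_{n})t=(g_{n-1})_n$; $U$ is identified with the subgroup of elements $(\dots,1,u,1,\dots)$ with $u$ in position $0$. A nontrivial projection means $e=e^*=e^2$, $e\ne 0,1$. $\delta$ is the Kronecker delta. *)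

(* Defs.v *)
From HB Require Import structures.
From mathcomp Require Import all_boot all_order all_algebra.
From mathcomp Require Import finmap.
From mathcomp Require Import Rstruct.
From mathcomp.real_closed Require Import complex.

Set Implicit Arguments.
Unset Strict Implicit.
Unset Printing Implicit Defensive.

Import Order.TTheory GRing.Theory Num.Theory.
Local Open Scope fset_scope.
Local Open Scope ring_scope.

Definition Cx : numClosedFieldType := (Rdefinitions.R)[i].

Section GroupAlgebra.
Variables (G : choiceType) (mulG : G -> G -> G) (invG : G -> G) (oneG : G).

Definition galg := {fsfun G -> Cx with 0}.

Definition galg_zero : galg := [fsfun g in fset0 => 0].

Definition galg_of (x : G) : galg := [fsfun g in [fset x] => 1].

Definition galg_one : galg := galg_of oneG.

Definition galg_add (a b : galg) : galg :=
  [fsfun g in finsupp a `|` finsupp b => a g + b g].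

Definition galg_scale (c : Cx) (a : galg) : galg :=
  [fsfun g in finsupp a => c * a g].

Definition galg_sub (a b : galg) : galg := galg_add a (galg_scale (-1) b).

Definition galg_mul (a b : galg) : galg :=
  [fsfun g in [fset mulG x y | x in finsupp a, y in finsupp b] =>
     \sum_(x <- finsupp a) a x * b (mulG (invG x) g)].

Definition galg_star (a : galg) : galg :=
  [fsfun g in [fset invG x | x in finsupp a] => (a (invG g))^*].

Definition nontrivial_projection (e : galg) : Prop :=
  [/\ galg_star e = e, galg_mul e e = e, e <> galg_zero & e <> galg_one].

End GroupAlgebra.

Definition galg_map (G H : choiceType) (f : G -> H) (a : galg G) : galg H :=
  [fsfun y in [fset f x | x in finsupp a] =>
     \sum_(x <- finsupp a | f x == y) a x].

(* The wreath product U wr Z = (+)_{i in Z} U  x|  C_oo.               *)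
(* An element (g, a) stands for g t^a, where g : Z -> U is finitely    *)
(* supported (default 1).  The action is t^-1 (g_n)_n t = (g_(n-1))_n, *)
(* i.e. t^-k g t^k = shift k g with (shift k g)_n = g_(n-k).           *)
Section Wreath.
Variable U : groupType.

Definition dsum := {fsfun int -> U with 1%g}.

Definition dsum_one : dsum := [fsfun n in fset0 => 1%g].

Definition dsum_mul (g h : dsum) : dsum :=
  [fsfun n in finsupp g `|` finsupp h => (g n * h n)%g].

Definition dsum_inv (g : dsum) : dsum :=
  [fsfun n in finsupp g => (g n)^-1%g].

Definition dsum_shift (k : int) (g : dsum) : dsum :=
  [fsfun n in [fset m + k | m in finsupp g] => g (n - k)].

Definition dsum_of (u : U) : dsum := [fsfun n in [fset (0 : int)] => u].

Definition wreath : choiceType := (dsum * int)%type.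

Definition wone : wreath := (dsum_one, 0).

(* (g t^a)(h t^b) = g (t^a h t^-a) t^(a+b) = g shift(-a) h  t^(a+b) *)
Definition wmul (x y : wreath) : wreath :=
  (dsum_mul x.1 (dsum_shift (- x.2) y.1), x.2 + y.2).

Definition winv (x : wreath) : wreath :=
  (dsum_shift x.2 (dsum_inv x.1), - x.2).

Definition wt : wreath := (dsum_one, 1).

Definition wU (u : U) : wreath := (dsum_of u, 0).

Definition wpown (x : wreath) (n : nat) : wreath := iter n (wmul x) wone.

Definition wpowz (x : wreath) (z : int) : wreath :=
  match z with
  | Posz n => wpown x n
  | Negz n => winv (wpown x n.+1)
  end.

Definition W := galg wreath.
Definition Wmul := galg_mul wmul winv.
Definition Wsub := @galg_sub wreath.
Definition Wone := galg_one wone.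
Definition Wt (z : int) : W := galg_of (wpowz wt z).

Definition e_ (e : galg U) (i : int) : W :=
  Wmul (Wt (- i)) (Wmul (galg_map wU e) (Wt i)).

Definition f_ (e : galg U) (i : int) : W := Wsub Wone (e_ e i).

Definition q_ (e : galg U) (n : nat) : W :=
  Wmul (f_ e 1) (foldr (fun i acc => Wmul (e_ e i%:Z) acc) (f_ e n%:Z)
                       (iota 2 (n - 2))).

End Wreath.

Definition nontrivial_projection_in (U : groupType) (e : galg U) : Prop :=
  nontrivial_projection (fun x y : U => (x * y)%g) (fun x : U => x^-1%g) 1%g e.

Definition has_torsion (U : groupType) : Prop :=
  exists u : U, u != 1%g /\ exists k : nat, (0 < k)%N /\ (u ^+ k)%g = 1%g.

(* Main.v *)
Require Import Defs.
From HB Require Import structures.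
From mathcomp Require Import all_boot all_order all_algebra.
From mathcomp Require Import finmap.
From mathcomp Require Import Rstruct.
From mathcomp.real_closed Require Import complex.
From mathcomp Require Import ring zify.
From Stdlib Require Import Classical.
Import GRing.Theory Num.Theory.
Local Open Scope fset_scope.
Local Open Scope ring_scope.

Lemma sum_supp (K : choiceType) (S T : {fset K}) (F : K -> Cx) :
  (forall x, F x != 0 -> x \in S) -> (forall x, F x != 0 -> x \in T) ->
  \sum_(x <- S) F x = \sum_(x <- T) F x.
Proof.
move=> HS HT.
rewrite (big_fset_incl _ (fsubsetUl S T)); last first.
  by move=> x _ xS; apply/eqP; apply: contraNT xS => /HS.
rewrite (big_fset_incl _ (fsubsetUr S T)) //.
by move=> x _ xS; apply/eqP; apply: contraNT xS => /HT.
Qed.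

Definition group_laws {G : Type} (mul : G -> G -> G) (inv : G -> G) (one : G) :=
  [/\ associative mul, left_id one mul, right_id one mul,
      left_inverse one inv mul & right_inverse one inv mul].

Section GA.
Context {G : choiceType} {mul : G -> G -> G} {inv : G -> G} {one : G}.
Hypothesis grp : group_laws mul inv one.
Let gA : associative mul. Proof. by case: grp. Qed.
Let g1l : left_id one mul. Proof. by case: grp. Qed.
Let g1r : right_id one mul. Proof. by case: grp. Qed.
Let gVl : left_inverse one inv mul. Proof. by case: grp. Qed.
Let gVr : right_inverse one inv mul. Proof. by case: grp. Qed.

Lemma mulK x y : mul (inv x) (mul x y) = y.
Proof. by rewrite gA gVl g1l. Qed.
Lemma mulKV x y : mul x (mul (inv x) y) = y.
Proof. by rewrite gA gVr g1l. Qed.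
Lemma invK x : inv (inv x) = x.
Proof. by rewrite -[RHS](mulK (inv x)) gVl g1r. Qed.
Lemma invM x y : inv (mul x y) = mul (inv y) (inv x).
Proof.
have H : mul (mul x y) (mul (inv y) (inv x)) = one.
  by rewrite gA -(gA x) gVr g1r gVr.
by rewrite -[LHS]g1r -H gA gVl g1l.
Qed.
Lemma mulI x : injective (mul x).
Proof. by move=> y z /(congr1 (mul (inv x))); rewrite !mulK. Qed.

Lemma mulIr c a b : mul a c = mul b c -> a = b.
Proof. by move/(congr1 (fun w => mul w (inv c))); rewrite -!gA gVr !g1r. Qed.

Local Notation A := (galg G).
Local Notation gmul := (galg_mul mul inv).

Lemma zeroE g : @galg_zero G g = 0.
Proof. by rewrite fsfunE inE. Qed.

Lemma ofE (x g : G) : galg_of x g = (g == x)%:R.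
Proof. by rewrite fsfunE inE; case: eqP. Qed.

Lemma addE (a b : A) g : galg_add a b g = a g + b g.
Proof.
rewrite fsfunE inE; case: ifP => // /negbT; rewrite negb_or => /andP[ha hb].
by rewrite !fsfun_dflt // addr0.
Qed.

Lemma scaleE c (a : A) g : galg_scale c a g = c * a g.
Proof.
by rewrite fsfunE; case: ifP => // /negbT ha; rewrite fsfun_dflt // mulr0.
Qed.

Lemma mulE (a b : A) g : gmul a b g = \sum_(x <- finsupp a) a x * b (mul (inv x) g).
Proof.
rewrite fsfunE; case: ifP => // /negbT H.
rewrite big1_seq // => x /andP[_ xa]; apply/eqP; apply: contraNT H => H.
rewrite mulf_eq0 negb_or in H; case/andP: H => _ H.
apply/imfset2P; exists x => //; exists (mul (inv x) g); first by rewrite mem_finsupp.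
by rewrite mulKV.
Qed.

Lemma mulE' (S : {fset G}) (a b : A) g : (forall x, a x != 0 -> x \in S) ->
  gmul a b g = \sum_(x <- S) a x * b (mul (inv x) g).
Proof.
move=> HS; rewrite mulE; apply: sum_supp => x.
  by rewrite mulf_eq0 negb_or mem_finsupp => /andP[].
by rewrite mulf_eq0 negb_or => /andP[/HS].
Qed.

Lemma galg_ext (a b : A) : (forall g, a g = b g) -> a = b.
Proof. by move=> H; apply/fsfunP. Qed.

Lemma mulAg (a b c : A) : gmul (gmul a b) c = gmul a (gmul b c).
Proof.
apply: galg_ext => g.
pose T := [fset mul x y | x in finsupp a, y in finsupp b].
rewrite (@mulE' T); last first.
  move=> z; rewrite mulE => H; apply: contraNT H => zT.
  rewrite big1_seq // => x /andP[_ xa]; apply/eqP; apply: contraNT zT => H.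
  rewrite mulf_eq0 negb_or in H; case/andP: H => _ H.
  apply/imfset2P; exists x => //; exists (mul (inv x) z); first by rewrite mem_finsupp.
  by rewrite mulKV.
under eq_bigr do rewrite mulE big_distrl /=.
rewrite exchange_big /= mulE; apply: eq_bigr => x _.
rewrite mulE big_distrr /=.
rewrite (@sum_supp _ T [fset mul x y | y in finsupp b]); last 2 first.
- move=> z; rewrite !mulf_eq0 !negb_or => /andP[/andP[xa H] _].
  apply/imfset2P; exists x; first by rewrite mem_finsupp.
  by exists (mul (inv x) z); [rewrite mem_finsupp | rewrite mulKV].
- move=> z; rewrite !mulf_eq0 !negb_or => /andP[/andP[xa H] _].
  by apply/imfsetP; exists (mul (inv x) z); [rewrite /= mem_finsupp | rewrite mulKV].
rewrite big_imfset /=; last by move=> y z _ _; apply: mulI.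
apply: eq_bigr => y _; rewrite mulK invM -gA mulrA //.
Qed.

Lemma mulDl (a b c : A) : gmul (galg_add a b) c = galg_add (gmul a c) (gmul b c).
Proof.
apply: galg_ext => g; rewrite addE.
have H1 : forall x, galg_add a b x != 0 -> x \in finsupp a `|` finsupp b.
  move=> x; rewrite addE inE !mem_finsupp; apply: contraR; rewrite negb_or.
  by case/andP => /negPn/eqP -> /negPn/eqP ->; rewrite addr0.
rewrite (mulE' _ _ _ _ H1) (@mulE' (finsupp a `|` finsupp b) a); last first.
  by move=> x xa; rewrite inE mem_finsupp xa.
rewrite (@mulE' (finsupp a `|` finsupp b) b); last first.
  by move=> x xa; rewrite inE !mem_finsupp xa orbT.
by rewrite -big_split /=; apply: eq_bigr => x _; rewrite addE mulrDl.
Qed.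

Lemma mulDr (a b c : A) : gmul a (galg_add b c) = galg_add (gmul a b) (gmul a c).
Proof.
apply: galg_ext => g; rewrite addE !mulE -big_split /=.
by apply: eq_bigr => x _; rewrite addE mulrDr.
Qed.

Lemma mulZl k (a b : A) : gmul (galg_scale k a) b = galg_scale k (gmul a b).
Proof.
apply: galg_ext => g; rewrite scaleE (@mulE' (finsupp a)); last first.
  by move=> x; rewrite scaleE mulf_eq0 negb_or mem_finsupp => /andP[].
by rewrite mulE big_distrr /=; apply: eq_bigr => x _; rewrite scaleE mulrA.
Qed.

Lemma mulZr k (a b : A) : gmul a (galg_scale k b) = galg_scale k (gmul a b).
Proof.
apply: galg_ext => g; rewrite scaleE !mulE big_distrr /=.
by apply: eq_bigr => x _; rewrite scaleE mulrCA.
Qed.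

Lemma ofE_neq0 (x z : G) : galg_of x z != 0 -> z = x.
Proof. by rewrite ofE; case: (eqVneq z x) => [->//|_] /=; rewrite mulr0n eqxx. Qed.

Lemma ofM x y : gmul (galg_of x) (galg_of y) = galg_of (mul x y).
Proof.
apply: galg_ext => g; rewrite (@mulE' [fset x]); last first.
  by move=> z /ofE_neq0 ->; rewrite inE.
rewrite big_seq_fset1 !ofE eqxx mul1r.
apply/eqP; rewrite eqr_nat; apply/eqP; congr nat_of_bool.
apply/eqP/eqP => [<-|->]; [by rewrite mulKV | by rewrite mulK].
Qed.

Lemma of_mull x (a : A) g : gmul (galg_of x) a g = a (mul (inv x) g).
Proof.
rewrite (@mulE' [fset x]); last first.
  by move=> z /ofE_neq0 ->; rewrite inE.
by rewrite big_seq_fset1 ofE eqxx mul1r.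
Qed.

Lemma of_mulr y (a : A) g : gmul a (galg_of y) g = a (mul g (inv y)).
Proof.
rewrite mulE (@sum_supp _ _ [fset mul g (inv y)]); last 2 first.
- by move=> z; rewrite mulf_eq0 negb_or mem_finsupp => /andP[].
- move=> z; rewrite inE mulf_eq0 negb_or => /andP[_] /ofE_neq0 <-.
  by rewrite invM invK mulKV.
by rewrite big_seq_fset1 ofE invM invK -gA gVl g1r eqxx GRing.mulr1.
Qed.

Lemma inv1 : inv one = one.
Proof. by rewrite -[LHS]g1r gVl. Qed.

Lemma gmul1l (a : A) : gmul (galg_one one) a = a.
Proof. by apply: galg_ext => g; rewrite of_mull inv1 g1l. Qed.

Lemma gmul1r (a : A) : gmul a (galg_one one) = a.
Proof. by apply: galg_ext => g; rewrite of_mulr inv1 g1r. Qed.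

Lemma mul_comm_supp (a b : A) :
  (forall x y, a x != 0 -> b y != 0 -> mul x y = mul y x) -> gmul a b = gmul b a.
Proof.
move=> Hc; apply: galg_ext => g; rewrite [RHS]mulE.
rewrite (@sum_supp _ _ [fset mul (inv x) g | x in finsupp a]); last 2 first.
- by move=> z; rewrite mulf_eq0 negb_or mem_finsupp => /andP[].
- move=> y; rewrite mulf_eq0 negb_or => /andP[hb ha].
  apply/imfsetP; exists (mul (inv y) g); first by rewrite /= mem_finsupp.
  have := Hc _ _ ha hb => H.
  by rewrite -{2}(mulKV y g) -H mulK.
rewrite big_imfset /=; last first.
  by move=> x z _ _ /(congr1 (fun w => mul w (inv g))); rewrite -!gA gVr !g1r => /(congr1 inv); rewrite !invK.
rewrite mulE; apply: eq_bigr => x _.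
set y := mul (inv x) g; set x' := mul (inv y) g.
have E1 : a x != 0 -> b y != 0 -> x' = x.
  move=> ha hb; have := Hc _ _ ha hb => H.
  by rewrite /x' -{1}(mulKV x g) -/y H mulK.
have E2 : a x' != 0 -> b y != 0 -> x' = x.
  move=> ha hb; have := Hc _ _ ha hb => H.
  have Hx : mul x y = g by rewrite /y mulKV.
  have Hx' : mul x' y = g by rewrite H /x' mulKV.
  by apply: (mulIr y); rewrite Hx Hx'.
have [hb0|hb] := eqVneq (b y) 0; first by rewrite hb0 mulr0 mul0r.
have [ha0|ha] := eqVneq (a x) 0.
  have [ha'0|ha'] := eqVneq (a x') 0; first by rewrite ha0 ha'0 mulr0 mul0r.
  by rewrite -(E2 ha' hb) mulrC.
by rewrite (E1 ha hb) mulrC.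
Qed.
End GA.

Section Map.
Context {G : choiceType} {mulG : G -> G -> G} {invG : G -> G} {oneG : G}.
Context {K : choiceType} {mulH : K -> K -> K} {invH : K -> K} {oneH : K}.
Hypothesis grpG : group_laws mulG invG oneG.
Hypothesis grpH : group_laws mulH invH oneH.
Variable f : G -> K.
Hypothesis finj : injective f.
Hypothesis fM : forall x y, f (mulG x y) = mulH (f x) (f y).
Hypothesis fV : forall x, f (invG x) = invH (f x).

Lemma mapE_in (a : galg G) x : galg_map f a (f x) = a x.
Proof.
rewrite fsfunE; case: ifP => [_|/negbT H].
  rewrite big_mkcond /= (@sum_supp _ _ [fset x]); last 2 first.
  - by move=> z; case: ifP => _; rewrite ?eqxx // mem_finsupp.
  - by move=> z; case: ifP => [/eqP/finj -> _|_]; rewrite ?inE ?eqxx.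
  by rewrite big_seq_fset1 eqxx.
rewrite fsfun_dflt //; apply: contra H => xa.
by apply/imfsetP; exists x.
Qed.

Lemma mapE_out (a : galg G) y : (forall x, y <> f x) -> galg_map f a y = 0.
Proof.
move=> Hy; rewrite fsfunE; case: ifP => // /imfsetP [z _ E].
by case: (Hy z).
Qed.

Lemma map_mul (a b : galg G) :
  galg_map f (galg_mul mulG invG a b) = galg_mul mulH invH (galg_map f a) (galg_map f b).
Proof.
apply/fsfunP => w.
have [[u ->]|Hn] := classic (exists u, w = f u).
  rewrite mapE_in (mulE grpG) (@mulE' _ _ _ _ grpH [fset f x | x in finsupp a]).
    rewrite big_imfset /=; last by move=> x y _ _; apply: finj.
    by apply: eq_bigr => x _; rewrite -fV -fM !mapE_in.
  move=> v; have [[x ->]|Hv] := classic (exists x, v = f x).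
    by rewrite mapE_in => xa; apply/imfsetP; exists x => //; rewrite mem_finsupp.
  by rewrite mapE_out ?eqxx // => x E; apply: Hv; exists x.
rewrite mapE_out; last by move=> x E; apply: Hn; exists x.
rewrite (mulE grpH) big1_seq // => v _.
have [[x ->]|Hv] := classic (exists x, v = f x); last first.
  by rewrite mapE_out ?mul0r // => x E; apply: Hv; exists x.
rewrite [galg_map f b _]mapE_out ?mulr0 // => y E; apply: Hn; exists (mulG x y).
by rewrite fM -E (mulKV grpH).
Qed.
End Map.


Section Wr.
Variable U : groupType.

Lemma dmulE (g h : dsum U) n : dsum_mul g h n = (g n * h n)%g.
Proof.
rewrite fsfunE inE; case: ifP => // /negbT; rewrite negb_or => /andP[hg hh].
by rewrite !fsfun_dflt // mulg1.
Qed.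

Lemma dinvE (g : dsum U) n : dsum_inv g n = (g n)^-1%g.
Proof.
by rewrite fsfunE; case: ifP => // /negbT hg; rewrite !fsfun_dflt // invg1.
Qed.

Lemma dshiftE k (g : dsum U) n : dsum_shift k g n = g (n - k).
Proof.
rewrite fsfunE; case: ifP => // /negbT H; rewrite fsfun_dflt //.
by apply: contra H => Hn; apply/imfsetP; exists (n - k) => //; rewrite subrK.
Qed.

Lemma dofE (u : U) n : dsum_of u n = if n == 0 then u else 1%g.
Proof. by rewrite fsfunE inE. Qed.

Lemma doneE n : dsum_one U n = 1%g.
Proof. by rewrite fsfunE inE. Qed.

Lemma dsum_ext (g h : dsum U) : (forall n, g n = h n) -> g = h.
Proof. by move=> H; apply/fsfunP. Qed.

Lemma wgrp : group_laws (@wmul U) (@winv U) (@wone U).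
Proof.
split.
- move=> [g a] [h b] [k c]; rewrite /wmul /=; congr pair; last by rewrite addrA.
  apply: dsum_ext => n; rewrite !dmulE !dshiftE !dmulE !dshiftE mulgA.
  by congr (_ * k _)%g; ring.
- move=> [g a]; rewrite /wmul /wone /=; congr pair; last by rewrite add0r.
  by apply: dsum_ext => n; rewrite dmulE dshiftE doneE mul1g oppr0 subr0.
- move=> [g a]; rewrite /wmul /wone /=; congr pair; last by rewrite addr0.
  by apply: dsum_ext => n; rewrite dmulE dshiftE doneE mulg1.
- move=> [g a]; rewrite /wmul /winv /wone /=; congr pair; last by rewrite addNr.
  apply: dsum_ext => n; rewrite dmulE !dshiftE dinvE doneE.
  by rewrite opprK mulVg.
- move=> [g a]; rewrite /wmul /winv /wone /=; congr pair; last by rewrite subrr.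
  apply: dsum_ext => n; rewrite dmulE !dshiftE dinvE doneE.
  by rewrite opprK addrK mulgV.
Qed.

Lemma wmul_one_pow (a b : int) : wmul (dsum_one U, a) (dsum_one U, b) = (dsum_one U, a + b).
Proof.
rewrite /wmul /=; congr pair.
by apply: dsum_ext => n; rewrite dmulE dshiftE !doneE mulg1.
Qed.

Lemma wpownE n : wpown (wt U) n = (dsum_one U, n%:Z).
Proof.
elim: n => [//|n IH].
by rewrite /wpown iterS -/(wpown _ _) IH /wt wmul_one_pow intS.
Qed.

Lemma wpowzE z : wpowz (wt U) z = (dsum_one U, z).
Proof.
case: z => n; first exact: wpownE.
rewrite /wpowz wpownE /winv /= NegzE; congr pair.
by apply: dsum_ext => k; rewrite dshiftE dinvE !doneE invg1.
Qed.

Lemma Ugrp : group_laws (fun x y : U => (x * y)%g) (fun x : U => x^-1%g) 1%g.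
Proof. by split; [exact: mulgA | exact: mul1g | exact: mulg1 | exact: mulVg | exact: mulgV]. Qed.

Lemma wU_inj : injective (@wU U).
Proof.
move=> u v [] /(congr1 (fun g : dsum U => g 0)); by rewrite !dofE eqxx.
Qed.

Lemma wUM (u v : U) : wU (u * v)%g = wmul (wU u) (wU v).
Proof.
rewrite /wU /wmul /=; congr pair.
by apply: dsum_ext => n; rewrite dmulE dshiftE !dofE oppr0 subr0; case: eqP; rewrite ?mulg1.
Qed.

Lemma wUV (u : U) : wU (u^-1)%g = winv (wU u).
Proof.
rewrite /wU /winv /=; congr pair.
by apply: dsum_ext => n; rewrite dshiftE dinvE !dofE subr0; case: eqP; rewrite ?invg1.
Qed.

End Wr.

Section Alg.
Variables (R C : Type) (M : R -> R -> R) (add : R -> R -> R) (scale : C -> R -> R).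
Variables (one Z : R) (m1 : C) (e : int -> R) (T : int -> R).
Hypotheses (MA : forall a b c, M (M a b) c = M a (M b c))
  (MDl : forall a b c, M (add a b) c = add (M a c) (M b c))
  (MDr : forall a b c, M a (add b c) = add (M a b) (M a c))
  (MZl : forall k a b, M (scale k a) b = scale k (M a b))
  (MZr : forall k a b, M a (scale k b) = scale k (M a b))
  (M1l : forall a, M one a = a) (M1r : forall a, M a one = a)
  (M0l : forall a, M Z a = Z) (M0r : forall a, M a Z = Z)
  (addNs : forall a, add a (scale m1 a) = Z)
  (adds0 : forall a, add a Z = a) (scale0s : forall c, scale c Z = Z)
  (e_idem : forall i, M (e i) (e i) = e i)
  (e_comm : forall i j, M (e i) (e j) = M (e j) (e i))
  (T_e : forall d i, M (T d) (e i) = M (e (i - d)) (T d))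
  (TM : forall a b, M (T a) (T b) = T (a + b)) (T0 : T 0 = one).

Definition f i := add one (scale m1 (e i)).

Lemma fe_zero i : M (f i) (e i) = Z.
Proof. by rewrite /f MDl M1l MZl e_idem addNs. Qed.
Lemma ef_zero i : M (e i) (f i) = Z.
Proof. by rewrite /f MDr M1r MZr e_idem addNs. Qed.
Lemma f_idem i : M (f i) (f i) = f i.
Proof. by rewrite {1}/f MDl M1l MZl ef_zero scale0s adds0. Qed.
Lemma ef_comm i j : M (e i) (f j) = M (f j) (e i).
Proof. by rewrite /f MDr MDl M1r M1l MZr MZl e_comm. Qed.
Lemma ff_comm i j : M (f i) (f j) = M (f j) (f i).
Proof.
by rewrite {2 3}/f MDr MDl M1r M1l MZr MZl ef_comm.
Qed.
Lemma T_f d i : M (T d) (f i) = M (f (i - d)) (T d).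
Proof. by rewrite /f MDr MDl M1r M1l MZr MZl T_e. Qed.

Definition fac (p : int * bool) := if p.2 then e p.1 else f p.1.

Lemma fac_comm x y : M (fac x) (fac y) = M (fac y) (fac x).
Proof.
case: x => i [] ; case: y => j [] /=.
- exact: e_comm.
- exact: ef_comm.
- by rewrite ef_comm.
- exact: ff_comm.
Qed.
Lemma fac_idem x : M (fac x) (fac x) = fac x.
Proof. by case: x => i [] /=; rewrite ?e_idem ?f_idem. Qed.
Lemma fac_zero i b : M (fac (i, b)) (fac (i, ~~ b)) = Z.
Proof. by case: b => /=; rewrite ?ef_zero ?fe_zero. Qed.

Definition sh (d : int) (p : int * bool) := (p.1 - d, p.2).

Lemma facT d x : M (T d) (fac x) = M (fac (sh d x)) (T d).
Proof. by case: x => i [] /=; [exact: T_e | exact: T_f]. Qed.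

Definition Q (s : seq (int * bool)) := foldr M one (map fac s).

Lemma Q_cons x s : Q (x :: s) = M (fac x) (Q s).
Proof. by []. Qed.

Lemma Q_comm x s : M (fac x) (Q s) = M (Q s) (fac x).
Proof.
elim: s => [|y s IH]; first by rewrite /Q /= M1l M1r.
by rewrite Q_cons -MA fac_comm MA IH MA.
Qed.

Lemma Q_absorb x s : x \in s -> M (fac x) (Q s) = Q s.
Proof.
elim: s => [//|y s IH]; rewrite inE => /orP[/eqP ->|xs].
  by rewrite Q_cons -MA fac_idem.
by rewrite Q_cons -MA fac_comm MA IH.
Qed.

Lemma Q_absorb_r x s : x \in s -> M (Q s) (fac x) = Q s.
Proof. by move=> xs; rewrite -Q_comm Q_absorb. Qed.

Lemma Q_idem s : M (Q s) (Q s) = Q s.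
Proof.
elim: s => [|y s IH]; first by rewrite /Q /= M1l.
by rewrite Q_cons MA -(MA (Q s)) -Q_comm MA IH -MA fac_idem.
Qed.

Lemma Q_zero s s' i b : (i, b) \in s -> (i, ~~ b) \in s' -> M (Q s) (Q s') = Z.
Proof.
move=> H1 H2; rewrite -(Q_absorb_r _ _ H1) -(Q_absorb _ _ H2) MA -(MA (fac _)) fac_zero.
by rewrite M0l M0r.
Qed.

Lemma Q_T d s : M (T d) (Q s) = M (Q (map (sh d) s)) (T d).
Proof.
elim: s => [|x s IH]; first by rewrite /Q /= M1l M1r.
by rewrite Q_cons /= -MA facT MA IH -MA.
Qed.


Definition qs (n : nat) : seq (int * bool) :=
  (1, false) :: [seq (i%:Z, true) | i <- iota 2 (n - 2)] ++ [:: (n%:Z, false)].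

Lemma memA n : (1, false) \in qs n.
Proof. exact: mem_head. Qed.
Lemma memB n k : (2 <= k < n)%N -> (k%:Z, true) \in qs n.
Proof.
move=> hk; rewrite /qs inE mem_cat; apply/orP; right; apply/orP; left.
apply: map_f; rewrite mem_iota; lia.
Qed.
Lemma memC n : (n%:Z, false) \in qs n.
Proof. by rewrite /qs inE mem_cat mem_seq1 eqxx !orbT. Qed.

Lemma map_sh0 s : map (sh 0) s = s.
Proof. by elim: s => [//|[i b] s IH] /=; rewrite IH /sh /= subr0. Qed.

Lemma main_alg m n m' n' : (1 <= m < n)%N -> (1 <= m' < n')%N ->
  M (Q (qs n')) (M (T (- m'%:Z)) (M (T m%:Z) (Q (qs n)))) =
  if (n == n') && (m == m') then Q (qs n) else Z.
Proof.
move=> hmn hmn'.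
rewrite -(MA (T _)) TM Q_T -MA.
have [<-|nmm] := eqVneq m' m.
  rewrite addNr T0 M1r map_sh0 andbT.
  have [<-|nn] := eqVneq n n'; first exact: Q_idem.
  case: (ltngtP n n') => [lt|gt|eq]; last by rewrite eq eqxx in nn.
    by apply: (@Q_zero _ _ n%:Z true); [apply: memB; lia | exact: memC].
  by apply: (@Q_zero _ _ n'%:Z false); [exact: memC | apply: memB; lia].
rewrite andbF.
suff -> : M (Q (qs n')) (Q (map (sh (- m'%:Z + m%:Z)) (qs n))) = Z by rewrite M0l.
case: (ltngtP m' m) => [lt|gt|eq]; last by rewrite eq eqxx in nmm.
  apply: (@Q_zero _ _ 1 false); first exact: memA.
  have -> : (1, ~~ false) = sh (- m'%:Z + m%:Z) ((1 + m - m')%N%:Z, true).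
    rewrite /sh /=; congr pair; lia.
  by apply: map_f; apply: memB; lia.
apply: (@Q_zero _ _ (1 + m' - m)%N%:Z true); first by apply: memB; lia.
have -> : ((1 + m' - m)%N%:Z, ~~ true) = sh (- m'%:Z + m%:Z) (1, false).
  rewrite /sh /=; congr pair; lia.
by apply: map_f; exact: memA.
Qed.

End Alg.

Section WA.
Variable U : groupType.
Variable e : galg U.
Hypothesis ee : galg_mul (fun x y : U => (x * y)%g) (fun x : U => x^-1%g) e e = e.

Local Notation M := (@Wmul U).
Local Notation T := (Wt U).
Local Notation Z := (@galg_zero (wreath U)).
Local Notation add := (@galg_add (wreath U)).
Local Notation scale := (@galg_scale (wreath U)).
Local Notation one := (Wone U).

Lemma MA a b c : M (M a b) c = M a (M b c).
Proof. exact: (mulAg (wgrp U)). Qed.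
Lemma MDl a b c : M (add a b) c = add (M a c) (M b c).
Proof. exact: (mulDl (wgrp U)). Qed.
Lemma MDr a b c : M a (add b c) = add (M a b) (M a c).
Proof. exact: (mulDr (wgrp U)). Qed.
Lemma MZl k a b : M (scale k a) b = scale k (M a b).
Proof. exact: (mulZl (wgrp U)). Qed.
Lemma MZr k a b : M a (scale k b) = scale k (M a b).
Proof. exact: (mulZr (wgrp U)). Qed.
Lemma M1l a : M one a = a.
Proof. exact: (gmul1l (wgrp U)). Qed.
Lemma M1r a : M a one = a.
Proof. exact: (gmul1r (wgrp U)). Qed.
Lemma M0l a : M Z a = Z.
Proof.
apply: galg_ext => g; rewrite /Wmul (mulE (wgrp U)) zeroE big1 // => x _.
by rewrite zeroE mul0r.
Qed.
Lemma M0r a : M a Z = Z.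
Proof.
apply: galg_ext => g; rewrite /Wmul (mulE (wgrp U)) zeroE big1 // => x _.
by rewrite zeroE mulr0.
Qed.

Lemma TM a b : M (T a) (T b) = T (a + b).
Proof. by rewrite /Wmul /Wt (ofM (wgrp U)) !wpowzE wmul_one_pow. Qed.
Lemma T0 : T 0 = one.
Proof. by rewrite /Wt wpowzE. Qed.
Lemma TMr a b X : M (T a) (M (T b) X) = M (T (a + b)) X.
Proof. by rewrite -MA TM. Qed.

Definition E := galg_map (@wU U) e.
Lemma EE : M E E = E.
Proof.
rewrite /Wmul /E -(map_mul (@Ugrp U) (wgrp U) (@wU U) (@wU_inj U) (@wUM U) (@wUV U)).
by rewrite ee.
Qed.
Lemma EEr X : M E (M E X) = M E X.
Proof. by rewrite -MA EE. Qed.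

Lemma eE i : e_ e i = M (T (- i)) (M E (T i)).
Proof. reflexivity. Qed.
Lemma e_idem i : M (e_ e i) (e_ e i) = e_ e i.
Proof. rewrite eE !MA TMr. rewrite addrN T0 M1l EEr. by []. Qed.
Lemma T_e d i : M (T d) (e_ e i) = M (e_ e (i - d)) (T d).
Proof.
rewrite !eE !MA TMr TM.
have -> : d + - i = - (i - d) by rewrite opprB addrC.
by rewrite subrK.
Qed.
Definition phi (i : int) (u : U) : wreath U := (dsum_shift i (dsum_of u), 0).

Lemma e_supp i w : e_ e i w != 0 -> exists u, w = phi i u.
Proof.
rewrite eE /Wmul (of_mull (wgrp U)) (of_mulr (wgrp U)).
set X := wmul _ _ => HX.
have [[u Hu]|Hn] := classic (exists u, X = wU u); last first.
  by move: HX; rewrite /E mapE_out ?eqxx // => u Hu; apply: Hn; exists u.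
exists u; case: (wgrp U) => gA g1l g1r gVl gVr.
have -> : w = wmul (wpowz (wt U) (- i)) (wmul (wU u) (wpowz (wt U) i)).
  rewrite -Hu /X -!gA gVl g1r gA gVr g1l //.
rewrite !wpowzE /phi /wmul /wU /=; congr pair; last by rewrite add0r addNr.
apply: dsum_ext => n; rewrite !dmulE !dshiftE !dmulE !dshiftE !doneE mulg1 mul1g.
by rewrite opprK.
Qed.

Lemma phi_comm i j u v : i != j -> wmul (phi i u) (phi j v) = wmul (phi j v) (phi i u).
Proof.
move=> ij; rewrite /wmul /phi /=; congr pair.
apply: dsum_ext => n; rewrite !dmulE !dshiftE !dofE oppr0 !subr0 !subr_eq0.
case: (eqVneq n i) => [ni|ni]; case: (eqVneq n j) => [nj|nj]; rewrite ?mulg1 ?mul1g //.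
by move: ij; rewrite -ni -nj eqxx.
Qed.

Lemma e_comm i j : M (e_ e i) (e_ e j) = M (e_ e j) (e_ e i).
Proof.
have [->//|ij] := eqVneq i j.
apply: (mul_comm_supp (wgrp U)) => x y /e_supp [u ->] /e_supp [v ->].
exact: phi_comm.
Qed.

Lemma fE i : f_ e i = add one (scale (-1) (e_ e i)).
Proof. by []. Qed.

Lemma addNs a : add a (scale (-1) a) = Z.
Proof. by apply: galg_ext => g; rewrite addE scaleE zeroE mulN1r subrr. Qed.
Lemma adds0 a : add a Z = a.
Proof. by apply: galg_ext => g; rewrite addE zeroE addr0. Qed.
Lemma scale0s c : scale c Z = Z.
Proof. by apply: galg_ext => g; rewrite scaleE zeroE mulr0. Qed.
Lemma scale1s a : scale 1 a = a.
Proof. by apply: galg_ext => g; rewrite scaleE mul1r. Qed.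
Lemma scales0 a : scale 0 a = Z.
Proof. by apply: galg_ext => g; rewrite scaleE zeroE mul0r. Qed.


Local Notation QQ := (Q _ _ M add scale one (-1) (e_ e)).

Lemma qE n : q_ e n = QQ (qs n).
Proof.
rewrite /q_ /Q /qs /=; congr (M _ _).
elim: (iota 2 (n - 2)) => [|i l IH] /=; first by rewrite M1r.
by rewrite IH.
Qed.

Lemma final m n m' n' : (1 <= m < n)%N -> (1 <= m' < n')%N ->
  M (q_ e n') (M (T (- m'%:Z)) (M (T m%:Z) (q_ e n)))
  = galg_scale ((n == n')%:R * (m == m')%:R) (q_ e n).
Proof.
move=> h1 h2; rewrite !qE.
rewrite (main_alg _ _ _ _ _ _ _ _ _ _ MA MDl MDr MZl MZr M1l M1r M0l M0r addNs adds0 scale0s e_idem e_comm T_e TM T0 _ _ _ _ h1 h2).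
case: (eqVneq n n') => _; case: (eqVneq m m') => _ /=;
  by rewrite ?mulr1 ?mulr0 ?mul0r ?scale1s ?scales0.
Qed.
End WA.

Local Close Scope fset_scope.

Theorem lemma3p2 (U : groupType) (torsion : has_torsion U)
  (e : galg U) (he : nontrivial_projection_in e)
  (m n m' n' : nat) (hmn : (1 <= m < n)%N) (hmn' : (1 <= m' < n')%N) :
  Wmul (q_ e n') (Wmul (Wt U (- m'%:Z)) (Wmul (Wt U m%:Z) (q_ e n)))
  = galg_scale ((n == n')%:R * (m == m')%:R) (q_ e n).
Proof.
case: he => _ ee _ _.
exact: (@final U e ee m n m' n' hmn hmn').
Qed.
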